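(* Let $K$ be a field, $d\ge 2$, and $p\ge 1$ an integer. Let $h\in K[x_{i_1,\dots,i_d}\mid i_j\in[p]]$ be a polynomial that can be written as $$h = x_{p,\dots,p}\,h' + r',$$ where $h'$ is a polynomial in the variables $x_{i_1,\dots,i_d}$ with all $i_j\in[p-1]$ having weight $(1^{p-1},\dots,1^{p-1})$, and $r'$ is a polynomial of weight $(1^p,\dots,1^p)$ not involving the variable $x_{p,\dots,p}$. Let $n_1,\dots,n_d\ge p$ and $T\in K^{n_1}\otimes\cdots\otimes K^{n_d}$, and let $G=\prod_{i=1}^d\mathrm{Sym}([n_i])$. Suppose that $(\sigma h)(T)=0$ for all $\sigma\in G$, but $(\sigma h')(T)\neq 0$ for some $\sigma\in G$. Then $$\mathrm{prk}(T)\le d(p-1)+\sum_{s=1}^{\lfloor d/2\rfloor}\binom{d}{s}(p-1)^{d-s}.$$ *)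

(* Defs.v *)
From HB Require Import structures.
From mathcomp Require Import all_boot all_order all_algebra all_fingroup.
From mathcomp Require Import mpoly.
Set Implicit Arguments. Unset Strict Implicit. Unset Printing Implicit Defensive.
Import GRing.Theory.
Local Open Scope ring_scope.

(* Index set of the variables x_{i_1,...,i_d}, i_j in [p] (0-based: 'I_p). *)
Definition vidx (d p : nat) := {ffun 'I_d -> 'I_p}.

(* Polynomial ring K[x_{i_1..i_d} | i_j in [p]]; variable v is 'X_(enum_rank v). *)
Definition polyring (K : fieldType) (d p : nat) := {mpoly K[#|vidx d p|]}.

Definition var (K : fieldType) (d p : nat) (v : vidx d p) : polyring K d p :=
  'X_(enum_rank v).

(* The weight of a monomial m: for each direction j and index a, the number of
   variables (with multiplicity) whose j-th index is a. *)
Definition has_weight (K : fieldType) (d p : nat) (w : 'I_d -> 'I_p -> nat)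
  (q : polyring K d p) : Prop :=
  forall m, m \in msupp q ->
    forall (j : 'I_d) (a : 'I_p),
      (\sum_(v : vidx d p | v j == a) m (enum_rank v))%N = w j a.

Definition not_involving (K : fieldType) (d p : nat) (v : vidx d p)
  (q : polyring K d p) : Prop :=
  forall m, m \in msupp q -> m (enum_rank v) = 0%N.

Definition midx (d : nat) (n : 'I_d -> nat) := forall j : 'I_d, 'I_(n j).
Definition tensor (K : fieldType) (d : nat) (n : 'I_d -> nat) := midx n -> K.

Definition depends_only (K : fieldType) (d : nat) (n : 'I_d -> nat)
  (S : {set 'I_d}) (f : tensor K n) : Prop :=
  forall x y : midx n, (forall j, j \in S -> x j = y j) -> f x = f y.

(* T is a sum of r tensors of partition rank one, i.e. of the form
   a(x_S) b(x_{[d] \ S}) with S a nonempty proper subset of [d]. *)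
Definition prk_decomp (K : fieldType) (d : nat) (n : 'I_d -> nat)
  (T : tensor K n) (r : nat) : Prop :=
  exists (S : 'I_r -> {set 'I_d}) (a b : 'I_r -> tensor K n),
    (forall i, S i != set0 /\ S i != setT) /\
    (forall i, depends_only (S i) (a i)) /\
    (forall i, depends_only (~: S i) (b i)) /\
    (forall x, T x = \sum_(i < r) a i x * b i x).

Definition prk_le (K : fieldType) (d : nat) (n : 'I_d -> nat)
  (T : tensor K n) (r : nat) : Prop :=
  exists2 r', (r' <= r)%N & prk_decomp T r'.

(* (sigma h)(T), where sigma = (sigma_1,...,sigma_d) acts on variables by
   x_{i_1..i_d} |-> x_{sigma_1(i_1),...,sigma_d(i_d)}, the indices in [p]
   being viewed inside [n_j] (p <= n_j). *)
Definition act_eval (K : fieldType) (d p : nat) (n : 'I_d -> nat)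
  (hn : forall j, (p <= n j)%N) (sigma : forall j : 'I_d, {perm 'I_(n j)})
  (q : polyring K d p) (T : tensor K n) : K :=
  q.@[fun k => T (fun j => sigma j (widen_ord (hn j) ((enum_val k : vidx d p) j)))].

(* Main.v *)
Require Import Defs.
From HB Require Import structures.
From mathcomp Require Import all_boot all_order all_algebra all_fingroup.
From mathcomp Require Import mpoly.
From mathcomp Require Import zify.
From Stdlib Require Import FunctionalExtensionality.
Import GRing.Theory.
Local Open Scope ring_scope.

Section Gen.
Variables (K : fieldType) (d : nat) (n : 'I_d -> nat).

Lemma decomp_fin (T : tensor K n) (I : finType) (A : {pred I})
  (S : I -> {set 'I_d}) (a b : I -> tensor K n) :
  (forall i, i \in A -> S i != set0 /\ S i != setT) ->
  (forall i, i \in A -> depends_only (S i) (a i)) ->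
  (forall i, i \in A -> depends_only (~: S i) (b i)) ->
  (forall x, T x = \sum_(i in A) a i x * b i x) -> prk_decomp T #|A|.
Proof.
move=> hS ha hb hT.
exists (fun i => S (enum_val i)), (fun i => a (enum_val i)), (fun i => b (enum_val i)).
split; first by move=> i; apply: hS; exact: enum_valP.
split; first by move=> i; apply: ha; exact: enum_valP.
split; first by move=> i; apply: hb; exact: enum_valP.
by move=> x; rewrite hT (big_enum_val (fun i => a i x * b i x)).
Qed.

Lemma decomp_add (T T1 T2 : tensor K n) r1 r2 :
  prk_decomp T1 r1 -> prk_decomp T2 r2 -> (forall x, T x = T1 x + T2 x) ->
  prk_decomp T (r1 + r2).
Proof.
move=> [S1 [a1 [b1 [h1 [h2 [h3 h4]]]]]] [S2 [a2 [b2 [g1 [g2 [g3 g4]]]]]] hT.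
exists (fun i => match split i with inl i => S1 i | inr i => S2 i end),
  (fun i => match split i with inl i => a1 i | inr i => a2 i end),
  (fun i => match split i with inl i => b1 i | inr i => b2 i end).
split; first by move=> i; case: split.
split; first by move=> i; case: split.
split; first by move=> i; case: split.
move=> x; rewrite hT h4 g4 big_split_ord /=.
congr (_ + _); apply: eq_bigr => i _.
  by rewrite -[lshift _ _]/(unsplit (inl i)) unsplitK.
by rewrite -[rshift _ _]/(unsplit (inr i)) unsplitK.
Qed.
End Gen.

Local Close Scope ring_scope.

Lemma sum_eq_ind (k D : nat) : \sum_(1 <= s < D) (k == s : nat) = (0 < k < D).
Proof.
elim: D => [|D IH]; first by rewrite big_geq // ltn0 andbF.
case: D IH => [|D] IH; first by rewrite big_geq //; case: (k) => [|[]].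
rewrite big_nat_recr //= IH ltnS.
case: (ltngtP k D.+1) => h; rewrite ?h; lia.
Qed.

Section Count.
Variables (d p : nat) (vl : vidx d p).
Definition Sv (v : vidx d p) : {set 'I_d} := [set j | v j == vl j].

Lemma count_S (S : {set 'I_d}) : #|[pred v : vidx d p | Sv v == S]| = (p.-1 ^ (d - #|S|))%N.
Proof.
pose F j : pred 'I_p := if j \in S then pred1 (vl j) else predC1 (vl j).
have -> : #|[pred v : vidx d p | Sv v == S]| = #|(family F : simpl_pred (vidx d p))|.
  apply: eq_card => v; rewrite [in LHS]inE /=.
apply/eqP/familyP => [hS j|H].
    by rewrite /F -hS !inE; case: eqP => e; rewrite !inE; apply/eqP.
  apply/setP => j; rewrite inE; have := H j; rewrite /F.
  by case: (j \in S); rewrite inE; [move=> ->|move=> /negbTE].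
have hc := @card_family 'I_d (fun _ => 'I_p) F.
rewrite [LHS](_ : _ = #|(family F : simpl_pred {dffun forall x : 'I_d, (fun _ => 'I_p) x})|) //.
rewrite hc foldrE big_map big_enum /=.
rewrite (bigID (fun j => j \in S)) /= big1 ?mul1n; last first.
  by move=> j jS; rewrite /F jS card1.
rewrite (eq_bigr (fun _ => p.-1)); last first.
  by move=> j /negbTE jS; rewrite /F jS cardC1 card_ord; case: (p).
rewrite prod_nat_const; congr (_ ^ _).
have := cardsC S; rewrite card_ord => hd.
have -> : #|(fun i : 'I_d => i \notin S)| = #|~: S| by apply: eq_card => i; rewrite !inE.
by transitivity (#|S| + #|~: S| - #|S|)%N; [rewrite addKn | rewrite hd].
Qed.

Lemma count_s (s : nat) : (\sum_(v : vidx d p) (#|Sv v| == s : nat) = 'C(d, s) * p.-1 ^ (d - s))%N.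
Proof.
rewrite -big_mkcond /=.
rewrite (partition_big Sv (fun S : {set 'I_d} => #|S| == s)) /=; last by move=> v /eqP ->.
rewrite (eq_bigr (fun _ => p.-1 ^ (d - s)))%N; last first.
  move=> S /eqP hS; rewrite -hS -(count_S S) -[RHS]sum1_card; apply: eq_bigl => v.
  by rewrite !inE andbC; case: eqP => // ->; rewrite eqxx.
rewrite sum_nat_const; congr (_ * _).
have := card_draws 'I_d s; rewrite card_ord => <-.
by apply: eq_card => S; rewrite !inE.
Qed.

Lemma count_small :
  #|[pred v : vidx d p | 0 < #|Sv v| < d./2.+1]| =
  (\sum_(1 <= s < d./2.+1) 'C(d, s) * p.-1 ^ (d - s))%N.
Proof.
rewrite -sum1_card big_mkcond /=.
rewrite (eq_bigr (fun v => \sum_(1 <= s < d./2.+1) (#|Sv v| == s : nat))%N); last first.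
  by move=> v _; rewrite sum_eq_ind inE; case: (_ && _).
rewrite exchange_big /=; apply: eq_bigr => s _; exact: count_s.
Qed.
End Count.

Local Open Scope ring_scope.
Set Implicit Arguments. Unset Strict Implicit.

Lemma sum_two (I : finType) (P : pred I) (f : I -> nat) u1 u2 :
  (\sum_(u | P u) f u)%N = 1%N -> P u1 -> P u2 -> u1 != u2 ->
  f u1 != 0%N -> f u2 != 0%N -> False.
Proof.
move=> hs p1 p2 ne f1 f2.
move: hs; rewrite (bigD1 u1) //= (bigD1 u2) /=; last by rewrite p2 eq_sym.
lia.
Qed.

Lemma sum_nz (I : finType) (P : pred I) (f : I -> nat) :
  (\sum_(u | P u) f u)%N = 1%N -> exists2 u, P u & f u != 0%N.
Proof.
move=> hs; case: (pickP [pred u | P u && (f u != 0)%N]) => [u /andP[]|h].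
  by exists u.
rewrite big1 in hs => // u pu; move: (h u) => /=; rewrite pu /= => /negbFE/eqP; apply.
Qed.

Section Main.
Variables (K : fieldType) (d p : nat) (hd : (2 <= d)%N) (hp : (1 <= p)%N)
  (vlast : vidx d p) (hvlast : forall j, nat_of_ord (vlast j) = p.-1)
  (h' r' : polyring K d p)
  (hw' : has_weight (fun _ a => nat_of_bool (a < p.-1)%N) h')
  (hwr : has_weight (fun _ _ => 1%N) r')
  (hr' : not_involving vlast r')
  (n : 'I_d -> nat) (hn : forall j, (p <= n j)%N) (T : tensor K n)
  (s0 : forall j : 'I_d, {perm 'I_(n j)}).

Definition ev (k : 'I_#|vidx d p|) : vidx d p := enum_val k.
Definition w (j : 'I_d) (a : 'I_p) : 'I_(n j) := s0 j (widen_ord (hn j) a).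

Lemma w_inj j : injective (w j).
Proof. by move=> a b /perm_inj /(congr1 val) /= /val_inj. Qed.

Definition env0 (k : 'I_#|vidx d p|) : K := T (fun j => w j (ev k j)).
Definition e (x : midx n) (k : 'I_#|vidx d p|) : K :=
  T (fun j => if ev k j == vlast j then x j else w j (ev k j)).

Lemma h'_var m k : m \in msupp h' -> m k != 0%N -> forall j, ev k j != vlast j.
Proof.
move=> hm mk j; apply/negP => /eqP hj.
have := hw' hm j (vlast j); rewrite hvlast ltnn /=.
move/eqP; rewrite sum_nat_eq0 => /forallP /(_ (ev k)).
by rewrite hj eqxx /= /ev enum_valK (negbTE mk).
Qed.

Lemma claim1 x : h'.@[e x] = h'.@[env0].
Proof.
rewrite !mevalE; apply: eq_big_seq => m hm; congr (_ * _).
apply: eq_bigr => k _; case: (eqVneq (m k) 0%N) => [->|mk]; first by rewrite !expr0.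
congr (_ ^+ _); rewrite /e /env0; congr (T _).
apply: functional_extensionality_dep => j.
by rewrite (negbTE (h'_var hm mk j)).
Qed.

Definition lowI (b : 'I_(p.-1)) : 'I_p := widen_ord (leq_pred p) b.
Definition low j (y : 'I_(n j)) : bool := [exists b : 'I_(p.-1), y == w j (lowI b)].
Arguments low : clear implicits.
Definition sx (x : midx n) j : {perm 'I_(n j)} := (s0 j * tperm (w j (vlast j)) (x j))%g.

Lemma notlast_low j (a : 'I_p) : a != vlast j -> exists b, a = lowI b.
Proof.
move=> ha; have hlt : (a < p.-1)%N.
  have := ltn_ord a; move: ha; rewrite -(inj_eq val_inj) /= hvlast; lia.
by exists (Ordinal hlt); apply: val_inj.
Qed.

Lemma lowI_last j b : lowI b != vlast j.
Proof. rewrite -(inj_eq val_inj) /= hvlast; have := ltn_ord b; lia. Qed.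

Definition high (x : midx n) := [forall j, ~~ low j (x j)].

Lemma claim2 x : high x -> forall k,
  T (fun j => sx x j (widen_ord (hn j) (ev k j))) = e x k.
Proof.
move=> /forallP hx k; rewrite /e; congr (T _).
apply: functional_extensionality_dep => j.
rewrite permM -/(w j (ev k j)); case: eqP => [->|/eqP ne]; first by rewrite tpermL.
apply: tpermD; first by rewrite (inj_eq (@w_inj j)) eq_sym.
have [b hb] := notlast_low ne.
apply/eqP => hxj; have := hx j; rewrite /low; case/existsP; exists b.
by rewrite hxj hb.
Qed.

Lemma claim3 x : high x ->
  (forall sigma : (forall j : 'I_d, {perm 'I_(n j)}),
     act_eval hn sigma (var K vlast * h' + r') T = 0) ->
  h'.@[env0] * T x + r'.@[e x] = 0.
Proof.
move=> hx hz; have := hz (sx x); rewrite /act_eval.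
rewrite (meval_eq _ (claim2 hx)) mevalD mevalM /var mevalXU claim1.
suff -> : e x (enum_rank vlast) = T x by rewrite mulrC.
rewrite /e /ev enum_rankK; congr (T _).
by apply: functional_extensionality_dep => j; rewrite eqxx.
Qed.

Definition SV (v : vidx d p) : {set 'I_d} := [set j | v j == vlast j].
Definition small (v : vidx d p) := (0 < #|SV v| < d./2.+1)%N.

Lemma r'_w m j : m \in msupp r' ->
  (\sum_(v : vidx d p | v j == vlast j) m (enum_rank v))%N = 1%N.
Proof. by move=> hm; apply: hwr. Qed.

Lemma r'_disj m (u1 u2 : vidx d p) j : m \in msupp r' -> u1 != u2 ->
  m (enum_rank u1) != 0%N -> m (enum_rank u2) != 0%N ->
  u1 j == vlast j -> u2 j == vlast j -> False.
Proof.
move=> hm ne h1 h2 e1 e2.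
exact: (sum_two (r'_w j hm) e1 e2 ne h1 h2).
Qed.

Lemma r'_one m (u : vidx d p) j : m \in msupp r' -> m (enum_rank u) != 0%N ->
  j \in SV u -> m (enum_rank u) = 1%N.
Proof.
move=> hm nz; rewrite inE => hj.
have := r'_w j hm; rewrite (bigD1 u) //=; lia.
Qed.

Lemma exists_small m : m \in msupp r' ->
  exists u : vidx d p, (m (enum_rank u) != 0%N) && small u.
Proof.
move=> hm; pose j0 : 'I_d := Ordinal (ltnW hd).
have [u hu nzu] := sum_nz (r'_w j0 hm).
have neul : u != vlast.
  by apply/eqP => eu; move: nzu; rewrite eu (hr' hm).
have [j1 hj1] : exists j1, u j1 != vlast j1.
  apply/existsP; apply: contraR neul => /existsPn hall.
  by apply/eqP/ffunP => j; have := hall j; rewrite negbK => /eqP.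
have [u' hu' nzu'] := sum_nz (r'_w j1 hm).
have neuu' : u != u' by apply: contraNneq hj1 => ->.
have disj : [disjoint SV u & SV u'].
  apply/pred0P => j /=; apply/negP => /andP [].
  rewrite !inE => e1 e2; exact: (r'_disj hm neuu' nzu nzu' e1 e2).
have hcard : (#|SV u| + #|SV u'| <= d)%N.
  rewrite -cardsUI (disjoint_setI0 disj) cards0 addn0.
  by apply: leq_trans (max_card _) _; rewrite card_ord.
have p1 : (0 < #|SV u|)%N by apply/card_gt0P; exists j0; rewrite inE.
have p2 : (0 < #|SV u'|)%N by apply/card_gt0P; exists j1; rewrite inE.
case: (leqP #|SV u| d./2) => hle.
  by exists u; rewrite nzu /small p1 ltnS hle.
exists u'; rewrite nzu' /small p2 ltnS /=.
move: hle hcard; rewrite -divn2; have := divn_eq d 2; have := ltn_pmod d (isT : (0 < 2)%N).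
move: (d %/ 2)%N (d %% 2)%N #|SV u| #|SV u'| => a b c e; lia.
Qed.

Definition ch (m : 'X_{1..#|vidx d p|}) : vidx d p :=
  if [pick u | (m (enum_rank u) != 0%N) && small u] is Some u then u else vlast.

Lemma ch_spec m : m \in msupp r' -> (m (enum_rank (ch m)) != 0%N) && small (ch m).
Proof.
move=> hm; rewrite /ch; case: pickP => [u //|h].
have [u hu] := exists_small hm; by have := h u; rewrite hu.
Qed.

Definition Av (v : vidx d p) (x : midx n) : K :=
  T (fun j => if v j == vlast j then x j else w j (v j)).
Definition Bv (v : vidx d p) (x : midx n) : K :=
  \sum_(m <- msupp r' | (m \in msupp r') && (v == ch m))
     r'@_m * \prod_(k | k != enum_rank v) e x k ^+ m k.

Lemma claim4 x : r'.@[e x] = \sum_(v | small v) Av v x * Bv v x.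
Proof.
rewrite mevalE.
rewrite /Bv; symmetry; under eq_bigr do rewrite big_distrr /=; symmetry.
rewrite -(exchange_big_dep small) /=; last first.
  by move=> m v hm /eqP ->; case/andP: (ch_spec hm).
rewrite big_seq_cond; apply: eq_big => [m|m /andP [hm _]]; first by rewrite andbT.
rewrite (big_pred1_eq _ (ch m)).
have /andP [nz sm] := ch_spec hm.
have [j hj] : exists j, j \in SV (ch m).
  by apply/card_gt0P; case/andP: sm.
rewrite (bigD1 (enum_rank (ch m))) //= (r'_one hm nz hj) expr1.
rewrite /e /ev enum_rankK mulrCA; congr (_ * _).
Qed.

Lemma Av_dep v : depends_only (SV v) (Av v).
Proof.
move=> x y hxy; rewrite /Av; congr (T _).
apply: functional_extensionality_dep => j.
by case: eqP => // /eqP hj; apply: hxy; rewrite inE.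
Qed.

Lemma Bv_dep v : depends_only (~: SV v) (Bv v).
Proof.
move=> x y hxy; rewrite /Bv; apply: eq_bigr => m /andP [hm /eqP ev'].
congr (_ * _); apply: eq_bigr => k hk.
case: (eqVneq (m k) 0%N) => [->|mk]; first by rewrite !expr0.
congr (_ ^+ _); rewrite /e; congr (T _).
apply: functional_extensionality_dep => j.
case: eqP => // /eqP ej; apply: hxy; rewrite !inE.
apply/negP => ej'.
have nz : m (enum_rank v) != 0%N by rewrite ev'; case/andP: (ch_spec hm).
have ne : v != ev k by apply: contraNneq hk => ->; rewrite /ev enum_valK.
apply: (r'_disj hm ne nz _ ej' ej).
by rewrite /ev enum_valK.
Qed.

Lemma min_low x : ~~ high x ->
  exists j0 : 'I_d, low j0 (x j0) /\ forall k : 'I_d, (k < j0)%N -> ~~ low k (x k).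
Proof.
move=> /forallPn [j lj]; rewrite negbK in lj.
have exP : exists m, [exists j : 'I_d, (val j == m) && low j (x j)].
  by exists (val j); apply/existsP; exists j; rewrite eqxx.
case: (ex_minnP exP) => m /existsP [j0 /andP [/eqP hjm lj0]] hmin.
exists j0; split => // k hk; apply/negP => lk.
have : (m <= k)%N by apply: hmin; apply/existsP; exists k; rewrite eqxx.
by rewrite -hjm leqNgt hk.
Qed.

Definition a1 (jb : 'I_d * 'I_(p.-1)) (x : midx n) : K :=
  (x jb.1 == w jb.1 (lowI jb.2))%:R.
Definition b1 (jb : 'I_d * 'I_(p.-1)) (x : midx n) : K :=
  [forall k : 'I_d, (k < jb.1)%N ==> ~~ low k (x k)]%:R *
  T (fun k => if k == jb.1 then w k (lowI jb.2) else x k).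

Lemma a1_dep jb : depends_only [set jb.1] (a1 jb).
Proof. by move=> x y hxy; rewrite /a1 hxy // inE. Qed.

Lemma b1_dep jb : depends_only (~: [set jb.1]) (b1 jb).
Proof.
move=> x y hxy; rewrite /b1; congr (_ * _).
  congr (_%:R); congr (nat_of_bool _); apply: eq_forallb => k; case: (ltnP k jb.1) => //= hk.
  rewrite hxy // !inE; apply/eqP => ek; move: hk; rewrite ek ltnn.
  by [].
congr (T _); apply: functional_extensionality_dep => k.
by case: eqP => // /eqP nk; apply: hxy; rewrite !inE.
Qed.

Lemma set1_proper (j : 'I_d) : [set j] != set0 /\ [set j] != setT.
Proof.
split; first by apply/set0Pn; exists j; rewrite inE.
apply/negP => /eqP h1; have := cardsT 'I_d; rewrite -h1 cards1 card_ord.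
by move=> ed; move: hd; rewrite -ed.
Qed.

Lemma SV_proper v : small v -> SV v != set0 /\ SV v != setT.
Proof.
case/andP => h0 h1; split.
  by apply/negP => /eqP e0; move: h0; rewrite e0 cards0.
apply/negP => /eqP e1; move: h1; rewrite e1 cardsT card_ord ltnS.
rewrite -divn2; have := divn_eq d 2; have := ltn_pmod d (isT : (0 < 2)%N).
move: hd (d %/ 2)%N (d %% 2)%N => hd' a b; lia.
Qed.

Definition a2 (c : K) (v : vidx d p) (x : midx n) : K :=
  [forall k, (k \in SV v) ==> ~~ low k (x k)]%:R * (- c^-1) * Av v x.
Definition b2 (v : vidx d p) (x : midx n) : K :=
  [forall k, (k \notin SV v) ==> ~~ low k (x k)]%:R * Bv v x.

Lemma a2_dep c v : depends_only (SV v) (a2 c v).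
Proof.
move=> x y hxy; rewrite /a2 (Av_dep hxy); congr (_%:R * _ * _); congr (nat_of_bool _).
by apply: eq_forallb => k; case: (boolP (k \in SV v)) => //= hk; rewrite hxy.
Qed.

Lemma b2_dep v : depends_only (~: SV v) (b2 v).
Proof.
move=> x y hxy; rewrite /b2 (Bv_dep hxy); congr (_%:R * _); congr (nat_of_bool _).
apply: eq_forallb => k; case: (boolP (k \in SV v)) => //= hk.
by rewrite hxy // inE hk.
Qed.

Lemma pointwise
  (hz : forall sigma : (forall j : 'I_d, {perm 'I_(n j)}),
     act_eval hn sigma (var K vlast * h' + r') T = 0)
  (hc : h'.@[env0] != 0) x :
  T x = \sum_(jb in [pred _ : 'I_d * 'I_(p.-1) | true]) a1 jb x * b1 jb x +
        \sum_(v in [pred v | small v]) a2 (h'.@[env0]) v x * b2 v x.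
Proof.
set c := h'.@[env0].
case: (boolP (high x)) => hx.
  rewrite big1 ?add0r; last first.
    move=> [j b] _; rewrite /a1 /=.
    case: eqP => [ej|]; last by rewrite mul0r.
    by move/forallP: hx => /(_ j); rewrite /low; case/existsP; exists b; rewrite ej.
  have h3 := claim3 hx hz; rewrite -/c in h3.
  have hr : r'.@[e x] = - (c * T x) by apply/eqP; rewrite -addr_eq0 addrC h3.
  have : \sum_(v in [pred v | small v]) a2 c v x * b2 v x = - c^-1 * r'.@[e x].
    rewrite claim4 big_distrr; apply: eq_bigr => v _.
    rewrite /a2 /b2.
    have -> : [forall k, (k \in SV v) ==> ~~ low k (x k)] = true.
      by apply/forallP => k; apply/implyP => _; move/forallP: hx; apply.
    have -> : [forall k, (k \notin SV v) ==> ~~ low k (x k)] = true.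
      by apply/forallP => k; apply/implyP => _; move/forallP: hx; apply.
    by rewrite !mul1r /= mulrA.
  by move=> ->; rewrite hr mulrN mulNr opprK mulrA mulVf // mul1r.
have [j0 [lj0 minj0]] := min_low hx.
rewrite [X in _ + X]big1 ?addr0; last first.
  move=> v _; rewrite /a2 /b2.
  case: (boolP (j0 \in SV v)) => hj0.
    have -> : [forall k, (k \in SV v) ==> ~~ low k (x k)] = false.
      by apply/negbTE/forallPn; exists j0; rewrite hj0 lj0.
    by rewrite !mul0r.
  have -> : [forall k, (k \notin SV v) ==> ~~ low k (x k)] = false.
    by apply/negbTE/forallPn; exists j0; rewrite hj0 lj0.
  by rewrite !mul0r mulr0.
have [b0 /eqP hb0] : exists b0, x j0 == w j0 (lowI b0) by apply/existsP.
rewrite (bigD1 (j0, b0)) //= big1 ?addr0; last first.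
  move=> [j b] /= hjb; rewrite /a1 /b1 /=.
  case: (ltngtP j j0) => hjj0.
  - case: eqP => [ej|]; last by rewrite mul0r.
    by have := minj0 j hjj0; rewrite /low; case/existsP; exists b; rewrite ej.
  - case: forallP => [H|_]; last by rewrite mul0r mulr0.
    by have := H j0; rewrite hjj0 lj0.
  - have ej : j = j0 by apply: val_inj.
    subst j; case: eqP => [ej|]; last by rewrite mul0r.
    have ebb : b = b0.
      apply: val_inj; have := w_inj (etrans (esym ej) hb0).
      by move/(congr1 val).
    by move: hjb; rewrite ebb eqxx.
rewrite /a1 /b1 /= hb0 eqxx mul1r.
case: forallP => [_|H]; last first.
  by exfalso; apply: H => k; apply/implyP; apply: minj0.
rewrite mul1r; congr (T _); apply: functional_extensionality_dep => k.
by case: eqP => // ->.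
Qed.

Lemma final
  (hz : forall sigma : (forall j : 'I_d, {perm 'I_(n j)}),
     act_eval hn sigma (var K vlast * h' + r') T = 0)
  (hc : h'.@[env0] != 0) :
  prk_le T (d * p.-1 + \sum_(1 <= s < d./2.+1) 'C(d, s) * p.-1 ^ (d - s))%N.
Proof.
have hT := pointwise hz hc.
exists (#|[pred _ : 'I_d * 'I_(p.-1) | true]| + #|[pred v | small v]|)%N.
  rewrite leq_add //.
    have -> : #|[pred _ : 'I_d * 'I_(p.-1) | true]| = #|{: ('I_d * 'I_(p.-1))%type}| by apply: eq_card.
    by rewrite card_prod !card_ord.
  by rewrite -(count_small d p vlast).
apply: decomp_add hT.
  apply: (@decomp_fin _ _ _ _ _ _ (fun jb : 'I_d * 'I_(p.-1) => [set jb.1]) a1 b1) => //.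
  - by move=> jb _; apply: set1_proper.
  - by move=> jb _; apply: a1_dep.
  - by move=> jb _; apply: b1_dep.
apply: (@decomp_fin _ _ _ _ _ _ SV (a2 h'.@[env0]) b2) => //.
- by move=> v; rewrite inE => /SV_proper; apply.
- by move=> v _; apply: a2_dep.
- by move=> v _; apply: b2_dep.
Qed.
End Main.

Unset Implicit Arguments. Set Strict Implicit.

Theorem proposition2 (K : fieldType) (d p : nat) (hd : (2 <= d)%N) (hp : (1 <= p)%N)
  (vlast : vidx d p) (hvlast : forall j, nat_of_ord (vlast j) = p.-1)
  (h h' r' : polyring K d p)
  (hdec : h = var K vlast * h' + r')
  (hw' : has_weight (fun _ a => nat_of_bool (a < p.-1)%N) h')
  (hwr : has_weight (fun _ _ => 1%N) r')
  (hr' : not_involving vlast r')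
  (n : 'I_d -> nat) (hn : forall j, (p <= n j)%N) (T : tensor K n)
  (hzero : forall sigma : (forall j : 'I_d, {perm 'I_(n j)}), act_eval hn sigma h T = 0)
  (hnz : exists sigma : (forall j : 'I_d, {perm 'I_(n j)}), act_eval hn sigma h' T != 0) :
  prk_le T (d * p.-1 + \sum_(1 <= s < d./2.+1) 'C(d, s) * p.-1 ^ (d - s))%N.
Proof.
subst h; case: hnz => s0 hc.
have hc' : h'.@[env0 hn T s0] != 0 by exact: hc.
exact: (final hd hp hvlast hw' hwr hr' hzero hc').
Qed.
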